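(* Let $X$ be a finite metric space with points labelled $x_1,\dots,x_m$, and regard its isometry group $\mathrm{Iso}(X)$ as a subgroup of the symmetric group $\mathfrak{S}_m$. Then the following assignment is a well-defined bijection $$\mathcal{L}(X)\;\longrightarrow\;\Big(\bigsqcup_{\substack{(r_1,\dots,r_m)\\ r_i\ge1,\ n=\sum r_i}}\mathrm{Met}_n/(\mathfrak{S}_{r_1}\times\cdots\times\mathfrak{S}_{r_m})\Big)\Big/\mathrm{Iso}(X):$$ given a line along a surjection $f\colon Y\to X$ with $\#Y=n$, set $r_i=\#f^{-1}(x_i)$, label the points of $Y$ so that $f^{-1}(x_i)=\{y_i^1,\dots,y_i^{r_i}\}$, and send the line to the class of the distance matrix of $Y$ with respect to the ordering $(y_1^1,\dots,y_1^{r_1},\dots,y_m^1,\dots,y_m^{r_m})$, in the component indexed by $(r_1,\dots,r_m)$. Here the tuple $(r_1,\dots,r_m)$ partitions the rows and columns of each matrix in $\mathrm{Met}_n$ into $m$ consecutive sections of sizes $r_1,\dots,r_m$; the factor $\mathfrak{S}_{r_i}$ acts by simultaneously permuting the rows and columns within the $i$-th section; and $\mathrm{Iso}(X)$ acts by permuting the sections (an element $\rho$ moving section $i$ to position $\rho(i)$, with the tuple $(r_1,\dots,r_m)$ permuted accordingly).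
   Context: For finite metric spaces $(X,d_X)$, $(Y,d_Y)$ and a surjection $f\colon Y\to X$, the line from $Y$ to $X$ along $f$ is the family $(Y_{f,t})_{0<t\le1}$ of metric spaces $Y_{f,t}=(Y,d_{f,t})$, $d_{f,t}(y,y')=t\,d_Y(y,y')+(1-t)\,d_X(f(y),f(y'))$. The set of lines to $X$, $\mathcal{L}(X)$, is the set of all such lines (over all finite metric spaces $Y$ and all surjections $f\colon Y\to X$) modulo the relation: $(Y_{f,t})\sim(Y_{g,t})$ (for $f,g\colon Y\to X$) if there exist isometries $h\colon Y\to Y$ and $k\colon X\to X$ with $k\circ f=g\circ h$. $\mathrm{Met}_n$ is the set of real $n\times n$ matrices $(d_{ij})$ with $d_{ii}=0$, $d_{ij}=d_{ji}>0$ for $i\neq j$, and $d_{ij}+d_{jk}\ge d_{ik}$ for all $i,j,k$ (i.e. distance matrices of ordered $n$-point metric spaces). *)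

(* Defs.v *)
From HB Require Import structures.
From mathcomp Require Import all_boot all_order all_algebra all_fingroup.
From mathcomp Require Import reals.
Set Implicit Arguments. Unset Strict Implicit. Unset Printing Implicit Defensive.
Import Order.TTheory GRing.Theory Num.Theory.
Local Open Scope ring_scope.

Definition is_metric (R : realType) (n : nat) (d : 'M[R]_n) : Prop :=
  (forall i, d i i = 0) /\
  (forall i j, i != j -> 0 < d i j) /\
  (forall i j, d i j = d j i) /\
  (forall i j k, d i k <= d i j + d j k).

Definition is_isometry (R : realType) (m : nat) (dX : 'M[R]_m)
  (k : {perm 'I_m}) : Prop :=
  forall i j, dX (k i) (k j) = dX i j.

(* Data of a line to X = ('I_m, dX): a finite metric space Y = ('I_n, dY)
   (every finite metric space is isometric to one of these) and a map
   f : Y -> X.  The line itself is the family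
   d_{f,t}(y,y') = t dY(y,y') + (1-t) dX(f y, f y'), 0 < t <= 1,
   which is determined by (dY, f). *)
Record line_data (R : realType) (m : nat) := LineData {
  ln_n : nat;
  ln_d : 'M[R]_ln_n;
  ln_f : 'I_ln_n -> 'I_m }.
Arguments ln_n {R m} l.
Arguments ln_d {R m} l.
Arguments ln_f {R m} l _.

Definition valid_line (R : realType) (m : nat) (L : line_data R m) : Prop :=
  is_metric (ln_d L) /\ (forall x : 'I_m, exists y, ln_f L y = x).

(* The equivalence relation defining L(X): isometries h of the source and
   k of X with k o f = g o h (transported along an isometry h : Y -> Y'
   since Y is only represented up to isometry). *)
Definition line_equiv (R : realType) (m : nat) (dX : 'M[R]_m)
  (L L' : line_data R m) : Prop :=
  exists (h : 'I_(ln_n L) -> 'I_(ln_n L')) (k : {perm 'I_m}),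
    [/\ bijective h,
        (forall a b, ln_d L' (h a) (h b) = ln_d L a b),
        is_isometry dX k &
        (forall y, k (ln_f L y) = ln_f L' (h y))].

Record sec_data (R : realType) (m : nat) := SecData {
  sd_n : nat;
  sd_r : 'I_m -> nat;
  sd_M : 'M[R]_sd_n }.
Arguments sd_n {R m} s.
Arguments sd_r {R m} s _.
Arguments sd_M {R m} s.

Definition valid_sec (R : realType) (m : nat) (T : sec_data R m) : Prop :=
  [/\ (forall i, (1 <= sd_r T i)%N),
      sd_n T = (\sum_(i < m) sd_r T i)%N &
      is_metric (sd_M T)].

Definition in_section (m : nat) (r : 'I_m -> nat) (i : 'I_m) (a : nat) : bool :=
  ((\sum_(j < m | (j < i)%N) r j)%N <= a)%N &&
  (a < \sum_(j < m | (j <= i)%N) r j)%N.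

Definition sec_equiv (R : realType) (m : nat) (dX : 'M[R]_m)
  (T T' : sec_data R m) : Prop :=
  exists (rho : {perm 'I_m}) (sigma : 'I_(sd_n T) -> 'I_(sd_n T')),
    [/\ is_isometry dX rho,
        (forall i, sd_r T' (rho i) = sd_r T i),
        bijective sigma,
        (forall (a : 'I_(sd_n T)) i, in_section (sd_r T) i a ->
                     in_section (sd_r T') (rho i) (sigma a)) &
        (forall a b, sd_M T' (sigma a) (sigma b) = sd_M T a b)].

Definition assigns (R : realType) (m : nat) (L : line_data R m)
  (T : sec_data R m) : Prop :=
  (forall i, sd_r T i = #|[set y | ln_f L y == i]|) /\
  exists ell : 'I_(sd_n T) -> 'I_(ln_n L),
    [/\ bijective ell,
        (forall (a : 'I_(sd_n T)) i, in_section (sd_r T) i a -> ln_f L (ell a) = i) &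
        (forall a b, sd_M T a b = ln_d L (ell a) (ell b))].

(* Main.v *)
Require Import Defs.
From HB Require Import structures.
From mathcomp Require Import all_boot all_order all_algebra all_fingroup.
From mathcomp Require Import reals.
Set Implicit Arguments. Unset Strict Implicit. Unset Printing Implicit Defensive.

Definition Lo (m : nat) (r : 'I_m -> nat) (k : nat) := (\sum_(j < m | (j < k)%N) r j)%N.

Lemma Lo_mono m (r : 'I_m -> nat) k l : (k <= l)%N -> (Lo r k <= Lo r l)%N.
Proof.
move=> kl; rewrite /Lo; rewrite (big_mkcond (fun j : 'I_m => (j < k)%N)) (big_mkcond (fun j : 'I_m => (j < l)%N)) /=.
apply: leq_sum => j _; case: ifP => // jk.
by rewrite (leq_trans jk kl).
Qed.

Lemma Lo_S m (r : 'I_m -> nat) (i : 'I_m) : Lo r i.+1 = (Lo r i + r i)%N.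
Proof.
rewrite /Lo (bigD1 i) //= addnC; congr (_ + _)%N.
by apply: eq_bigl => j; rewrite ltnS ltn_neqAle andbC.
Qed.

Lemma Lo_max m (r : 'I_m -> nat) k : (m <= k)%N -> Lo r k = (\sum_i r i)%N.
Proof.
move=> mk; rewrite /Lo; apply: eq_bigl => j.
by rewrite (leq_trans (ltn_ord j) mk).
Qed.

Lemma Lo0 m (r : 'I_m -> nat) : Lo r 0 = 0%N.
Proof. by rewrite /Lo big_pred0. Qed.

Lemma insecE m (r : 'I_m -> nat) i a :
  in_section r i a = (Lo r i <= a)%N && (a < Lo r i.+1)%N.
Proof.
by [].
Qed.

Lemma cover m (r : 'I_m -> nat) a :
  (a < \sum_i r i)%N -> exists i, in_section r i a.
Proof.
rewrite -(Lo_max r (leqnn m)).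
have H : forall k, (a < Lo r k)%N -> exists i, in_section r i a.
  elim=> [|k IH]; first by rewrite Lo0.
  move=> ha; case: (ltnP a (Lo r k)) => [/IH //|hk].
  case: (ltnP k m) => [km|mk].
    exists (Ordinal km); rewrite insecE /=; by rewrite hk ha.
  by move: ha; rewrite (Lo_max r (leqW mk)) -(Lo_max r mk) ltnNge hk.
exact: H.
Qed.

Lemma sec_uniq m (r : 'I_m -> nat) i j a :
  in_section r i a -> in_section r j a -> i = j.
Proof.
wlog: i j / (i <= j)%N.
  move=> W h1 h2; case: (leqP i j) => ij; first exact: W.
  by apply/esym; apply: W => //; apply: ltnW.
rewrite !insecE => ij /andP[h1 h2] /andP[h3 h4].
apply/val_inj/eqP; rewrite eqn_leq ij /=; apply: contraTT isT => ji.
rewrite -ltnNge in ji.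
have := leq_trans h2 (Lo_mono r ji).
by rewrite ltnNge h3.
Qed.

Lemma card_interval n lo hi : (lo <= hi)%N -> (hi <= n)%N ->
  #|[set a : 'I_n | (lo <= a)%N && (a < hi)%N]| = (hi - lo)%N.
Proof.
move=> lh hn.
rewrite -sum1_card big_mkcond /=.
rewrite (eq_bigr (fun a : 'I_n => ((lo <= a)%N && (a < hi)%N : nat))); last first.
  by move=> a _; rewrite inE; case: ifP.
rewrite -(big_mkord xpredT (fun a => ((lo <= a)%N && (a < hi)%N : nat))).
rewrite (big_cat_nat (leq0n hi) hn) /=.
rewrite [X in (_ + X)%N]big_nat_cond [X in (_ + X)%N]big1 ?addn0; last first.
  by move=> a /andP[/andP[ha _] _]; rewrite ltnNge ha andbF.
rewrite (big_cat_nat (leq0n lo) lh) /=.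
rewrite [X in (X + _)%N]big_nat_cond [X in (X + _)%N]big1 ?add0n; last first.
  by move=> a /andP[/andP[_ ha] _]; rewrite leqNgt ha.
rewrite big_nat_cond (eq_bigr (fun _ => 1%N)).
  by rewrite -big_nat_cond sum_nat_const_nat muln1.
by move=> a /andP[/andP[-> ->] _].
Qed.

Lemma card_sec m (r : 'I_m -> nat) n i : (\sum_j r j <= n)%N ->
  #|[set a : 'I_n | in_section r i a]| = r i.
Proof.
move=> hn.
have -> : [set a : 'I_n | in_section r i a] =
  [set a : 'I_n | (Lo r i <= a)%N && (a < Lo r i.+1)%N].
  by apply/setP => a; rewrite !inE insecE.
rewrite card_interval.
- by rewrite Lo_S addKn.
- by rewrite Lo_S leq_addr.
- apply: leq_trans hn; rewrite -(Lo_max r (leqnn m)); exact: Lo_mono.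
Qed.

Lemma sum_fibres n m (f : 'I_n -> 'I_m) :
  (\sum_i #|[set y | f y == i]|)%N = n.
Proof.
transitivity #|'I_n|; last exact: card_ord.
rewrite -sum1_card (partition_big f xpredT) //=.
apply: eq_bigr => i _; rewrite -sum1_card; apply: eq_bigl => y.
by rewrite inE.
Qed.

Lemma part1 (R : realType) m (L : line_data R m) : valid_line L ->
  exists T : sec_data R m, valid_sec T /\ assigns L T.
Proof.
case: L => n d f; rewrite /valid_line /= => -[Hd Hf].
pose r i := #|[set y | f y == i]|.
pose N := (\sum_i r i)%N.
have HN : N = n by exact: sum_fibres.
have cov : forall a : 'I_N, exists i, in_section r i a.
  by move=> a; apply: cover; exact: ltn_ord.
pose sec a := xchoose (cov a).
have secP a : in_section r (sec a) a := xchooseP (cov a).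
pose Fi i := enum [set y | f y == i].
pose Si i := enum [set a : 'I_N | in_section r i a].
pose ell a := nth (cast_ord HN a) (Fi (sec a)) (index a (Si (sec a))).
have sizeS i : size (Si i) = r i by rewrite -cardE card_sec.
have sizeF i : size (Fi i) = r i by rewrite -cardE.
have inS a : a \in Si (sec a) by rewrite mem_enum inE.
have idx a : (index a (Si (sec a)) < r (sec a))%N by rewrite -sizeS index_mem.
have fell a : f (ell a) = sec a.
  have : ell a \in Fi (sec a) by apply: mem_nth; rewrite sizeF.
  by rewrite mem_enum inE => /eqP.
have ellinj : injective ell.
  move=> a b e; have es : sec a = sec b by rewrite -fell e fell.
  have ia := idx a; have sa := inS a.
  rewrite es in ia sa.
  move: e; rewrite /ell es => e.
  have := congr1 (fun y => index y (Fi (sec b))) e.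
  rewrite /= !index_uniq ?enum_uniq ?sizeF ?idx // => ei.
  by rewrite -(nth_index a sa) ei nth_index.
have ellbij : bijective ell by apply: inj_card_bij => //; rewrite !card_ord HN.
pose M := (\matrix_(a, b) d (ell a) (ell b))%R.
exists (@SecData R m N r M); split.
  split => //=.
    move=> i; have [y hy] := Hf i; rewrite /r card_gt0; apply/set0Pn.
    by exists y; rewrite inE hy.
  case: Hd => [H0 [Hp [Hs Ht]]]; split; [|split; [|split]].
  - by move=> i; rewrite mxE.
  - by move=> i j ij; rewrite mxE; apply: Hp; rewrite (inj_eq ellinj).
  - by move=> i j; rewrite !mxE.
  - by move=> i j k; rewrite !mxE.
split => //=; exists ell; split => //.
  by move=> a i h; rewrite fell; exact: sec_uniq (secP a) h.
by move=> a b; rewrite mxE.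
Qed.

Lemma assigns_n (R : realType) m (L : line_data R m) T : assigns L T ->
  sd_n T = (\sum_i sd_r T i)%N.
Proof.
case: L T => n d f [N r M] /= [Hr [ell [eb _ _]]].
rewrite (eq_bigr _ (fun i _ => Hr i)) sum_fibres.
by have := bij_eq_card eb; rewrite !card_ord.
Qed.

Lemma part2 (R : realType) m (dX : 'M[R]_m) (L L' : line_data R m) T T' :
  assigns L T -> assigns L' T' -> line_equiv dX L L' -> sec_equiv dX T T'.
Proof.
move=> AT AT'; have nT' := assigns_n AT'.
case: L T AT => n d f [N r M] [/= Hr [ell [eb ef eM]]].
case: L' T' AT' nT' => n' d' f' [N' r' M'] [/= Hr' [ell' [eb' ef' eM']]] /= nT'.
case=> /= h [k [hb hd kiso hf]].
case: (eb') => g' g'K Kg'.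
have gb' : bijective g' by exists ell'.
exists k, (fun a => g' (h (ell a))); split => //=.
- move=> i; rewrite Hr Hr'.
  have -> : [set y' | f' y' == k i] = h @: [set y | f y == i].
    apply/setP => y'; case: (hb) => hi hK Kh.
    rewrite -[y']Kh mem_imset ?inE; last exact: can_inj hK.
    by rewrite -hf (inj_eq perm_inj).
  by rewrite card_imset //; exact: bij_inj hb.
- exact: (bij_comp (bij_comp gb' hb) eb).
- move=> a i hs.
  have [j hj] : exists j, in_section r' j (g' (h (ell a))).
    by apply: cover; rewrite -nT'.
  have := ef' _ _ hj; rewrite Kg' -hf (ef _ _ hs) => ->; exact: hj.
- by move=> a b; rewrite eM' !Kg' hd eM.
Qed.

Lemma part3 (R : realType) m (dX : 'M[R]_m) (L L' : line_data R m) T T' :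
  assigns L T -> assigns L' T' -> sec_equiv dX T T' -> line_equiv dX L L'.
Proof.
move=> AT AT'; have nT := assigns_n AT.
case: L T AT nT => n d f [N r M] [/= Hr [ell [eb ef eM]]] /= nT.
case: L' T' AT' => n' d' f' [N' r' M'] [/= Hr' [ell' [eb' ef' eM']]].
case=> rho [/= sigma [riso hr sb hsec hM]].
case: (eb) => g gK Kg.
have gb : bijective g by exists ell.
exists (fun y => ell' (sigma (g y))), rho; split => //=.
- exact: (bij_comp (bij_comp eb' sb) gb).
- by move=> a b; rewrite -eM' hM eM !Kg.
- move=> y.
  have [i hi] : exists i, in_section r i (g y) by apply: cover; rewrite -nT.
  have := ef _ _ hi; rewrite Kg => ->.
  by rewrite (ef' _ _ (hsec _ _ hi)).
Qed.

Lemma part4 (R : realType) m (dX : 'M[R]_m) (T : sec_data R m) : valid_sec T ->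
  exists (L : line_data R m) (T' : sec_data R m),
    [/\ valid_line L, assigns L T' & sec_equiv dX T' T].
Proof.
case: T => N r M [/= hr hN hM].
have cov : forall a : 'I_N, exists i, in_section r i a.
  by move=> a; apply: cover; rewrite -hN.
pose sec a := xchoose (cov a).
have secP a : in_section r (sec a) a := xchooseP (cov a).
have fib i : [set y | sec y == i] = [set a : 'I_N | in_section r i a].
  apply/setP => a; rewrite !inE; apply/eqP/idP => [<-|h]; first exact: secP.
  exact: sec_uniq (secP a) h.
exists (LineData M sec), (@SecData R m N r M); split.
- split => //= x.
  have : (0 < #|[set a : 'I_N | in_section r x a]|)%N by rewrite card_sec ?hN.
  rewrite card_gt0 => /set0Pn [a]; rewrite inE => h; exists a.
  exact: sec_uniq (secP a) h.
- split => /=; first by move=> i; rewrite fib card_sec ?hN.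
  exists id; split => //; first by exists id.
  by move=> a i h; exact: sec_uniq (secP a) h.
- exists 1%g, id; split => //=.
  + by move=> i j; rewrite !perm1.
  + by move=> i; rewrite perm1.
  + by exists id.
  + by move=> a i; rewrite perm1.
Qed.

Theorem proposition3p6 (R : realType) (m : nat) (dX : 'M[R]_m)
  (HX : is_metric dX) :
  (* the assignment is defined on every line and lands in the target *)
  (forall L : line_data R m, valid_line L ->
     exists T : sec_data R m, valid_sec T /\ assigns L T) /\
  (* well-defined on classes *)
  (forall (L L' : line_data R m) (T T' : sec_data R m),
     valid_line L -> valid_line L' -> assigns L T -> assigns L' T' ->
     line_equiv dX L L' -> sec_equiv dX T T') /\
  (* injective on classes *)
  (forall (L L' : line_data R m) (T T' : sec_data R m),
     valid_line L -> valid_line L' -> assigns L T -> assigns L' T' ->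
     sec_equiv dX T T' -> line_equiv dX L L') /\
  (* surjective on classes *)
  (forall T : sec_data R m, valid_sec T ->
     exists (L : line_data R m) (T' : sec_data R m),
       [/\ valid_line L, assigns L T' & sec_equiv dX T' T]).
Proof.
split; first exact: part1.
split; first by move=> L L' T T' _ _; exact: part2.
split; first by move=> L L' T T' _ _; exact: part3.
exact: part4.
Qed.
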